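(* Let $n\ge1$ and let $\mathcal P(n-1,1,2)$ be the set of lattice paths with steps $(1,1)$ (up) and $(1,-1)$ (down) from $(0,0)$ to $(2n,2)$ (so with $n+1$ up steps and $n-1$ down steps); the steps occupy positions $0,1,\dots,2n-1$, the step in position $m$ starting at the vertex reached after $m$ steps. (1) For $k>1$, among the paths in $\mathcal P(n-1,1,2)$ that start with a down step and have exactly $k-1$ even down steps, the number having exactly $j$ even down steps starting on or below the $x$-axis is independent of $j$ for $j=1,\dots,k-1$, and equals $\frac{1}{k-1}\binom{n}{k}\binom{n-1}{k-2}$. (2) Among the paths in $\mathcal P(n-1,1,2)$ that start with an up step and have exactly $k$ even up steps ($k\ge1$), the number having exactly $j$ even up steps starting on or below the $x$-axis is independent of $j$ for $j=1,\dots,k$, and equals $\frac1k\binom{n-1}{k-1}\binom{n}{k-1}$.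
   Context: An even up (down) step is an up (down) step in an even position. A step starts on or below the $x$-axis if its initial vertex has $y$-coordinate $\le0$. *)

(* Defs.v *)
From mathcomp Require Import all_boot all_order all_algebra.
Set Implicit Arguments. Unset Strict Implicit. Unset Printing Implicit Defensive.
Import Order.TTheory GRing.Theory Num.Theory.

(* A lattice path with up (1,1) / down (1,-1) steps is a sequence of booleans:
   true = up step, false = down step.  The step in position m (0-based) starts
   at the vertex reached after m steps. *)

Local Open Scope ring_scope.

Definition height (s : seq bool) (m : nat) : int :=
  \sum_(i < m) (if nth false s i then 1 else -1).

Local Close Scope ring_scope.

(* s is in P(n-1,1,2): a path from (0,0) to (2n,2), i.e. 2n steps with n+1 ups. *)
Definition inP (n : nat) (s : seq bool) : bool :=
  (size s == 2 * n) && (count id s == n.+1).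

Definition even_steps (b : bool) (s : seq bool) : nat :=
  count (fun m => ~~ odd m && (nth false s m == b)) (iota 0 (size s)).

Definition even_steps_low (b : bool) (s : seq bool) : nat :=
  count (fun m => [&& ~~ odd m, nth false s m == b & (height s m <= 0)%R])
        (iota 0 (size s)).

(* Main.v *)
Require Import Defs.
From mathcomp Require Import all_boot all_order all_algebra zify ring.
Import Order.TTheory GRing.Theory Num.Theory.
Set Implicit Arguments. Unset Strict Implicit.
Definition U (s : seq bool) m := count id (take m s).

Lemma U_S s m : U s m.+1 = U s m + nth false s m.
Proof.
rewrite /U; case: (ltnP m (size s)) => h.
  by rewrite (take_nth false h) -cats1 count_cat /= addn0.
rewrite nth_default // take_oversize ?(leqW h) // take_oversize // addn0 //.
Qed.

Lemma heightE s m : height s m = ((2 * U s m)%:Z - m%:Z)%R.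
Proof.
elim: m => [|m IH]; first by rewrite /height big_ord0 /U take0.
rewrite /height big_ord_recr /= -/(height s m) IH U_S.
by case: (nth false s m) => /=; lia.
Qed.

Lemma count_split2 (P : pred nat) n :
  count P (iota 0 (2 * n)) =
  count (fun a => P (2 * a)) (iota 0 n) + count (fun a => P (2 * a).+1) (iota 0 n).
Proof.
elim: n => [|n IH] //.
have -> : 2 * n.+1 = 2 * n + 2 by lia.
rewrite iotaD -(addn1 n) iotaD !count_cat IH !add0n.
have -> : iota (2 * n) 2 = [:: 2 * n; (2 * n).+1] by [].
have -> : iota n 1 = [:: n] by [].
rewrite /count !addn0; lia.
Qed.

Definition D (s : seq bool) a : int := ((U s (2 * a))%:Z - a%:Z)%R.
Definition mk (b : bool) (s : seq bool) a := nth false s (2 * a) == b.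
Definition prec s q r := ((D s q < D s r)%R) || ((D s q == D s r) && (r <= q)).
Definition rk b n s r := count (fun q => mk b s q && prec s q r) (iota 0 n).

Lemma even_stepsE b n s : size s = 2 * n ->
  even_steps b s = count (mk b s) (iota 0 n).
Proof.
move=> hs; rewrite /even_steps hs count_split2.
rewrite addnC (eq_count (a2 := pred0)); last by move=> a /=; rewrite oddM.
rewrite count_pred0 add0n; apply: eq_count => a /=.
by rewrite oddM.
Qed.

Lemma even_steps_lowE b n s : size s = 2 * n ->
  even_steps_low b s = count (fun a => mk b s a && (D s a <= 0)%R) (iota 0 n).
Proof.
move=> hs; rewrite /even_steps_low hs count_split2.
rewrite addnC (eq_count (a2 := pred0)); last by move=> a /=; rewrite oddM.
rewrite count_pred0 add0n; apply: eq_count => a /=.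
rewrite oddM /= heightE /mk /D; congr (_ && _).
by apply/idP/idP; lia.
Qed.

Lemma prec_refl s q : prec s q q.
Proof. by rewrite /prec eqxx leqnn orbT. Qed.

Lemma prec_total s q r : prec s q r || prec s r q.
Proof. rewrite /prec; case: (ltngtP q r) => h; lia. Qed.

Lemma prec_anti s q r : prec s q r -> prec s r q -> q = r.
Proof. rewrite /prec; lia. Qed.

Lemma prec_trans s q r t : prec s q r -> prec s r t -> prec s q t.
Proof. rewrite /prec; lia. Qed.

Lemma U_rot1 m m' s : m + m' <= size s -> U (rot m s) m' + U s m = U s (m + m').
Proof.
move=> h; rewrite /U /rot take_cat size_drop.
case: ltnP => h2.
  by rewrite takeD count_cat addnC.
rewrite (_ : m' - (size s - m) = 0); last by lia.
rewrite take0 cats0 (take_oversize (n := m + m')); last by lia.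
by rewrite -[in RHS](cat_take_drop m s) count_cat addnC.
Qed.

Lemma U_rot2 m m' s : m <= size s -> size s <= m + m' -> m' <= size s ->
  U (rot m s) m' + U s m = count id s + U s (m + m' - size s).
Proof.
move=> h1 h2 h3; rewrite /U /rot take_cat size_drop.
case: ltnP => h4; first by lia.
rewrite count_cat take_takel; last by lia.
rewrite (_ : m' - (size s - m) = m + m' - size s); last by lia.
have E : count id s = count id (take m s) + count id (drop m s).
  by rewrite -{1}(cat_take_drop m s) count_cat.
lia.
Qed.

Lemma D_rot1 n s r a : size s = 2 * n -> a + r <= n ->
  D (rot (2 * r) s) a = (D s (a + r) - D s r)%R.
Proof.
move=> hs h; rewrite /D.
have := @U_rot1 (2 * r) (2 * a) s.
rewrite (_ : 2 * r + 2 * a = 2 * (a + r)); last by lia.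
move=> H; have {}H := H ltac:(lia); lia.
Qed.

Lemma D_rot2 n s r a : size s = 2 * n -> count id s = n.+1 ->
  n <= a + r -> a <= n -> r <= n ->
  D (rot (2 * r) s) a = (D s (a + r - n) + 1 - D s r)%R.
Proof.
move=> hs hc h h1 h2; rewrite /D.
have H1 : 2 * r <= size s by rewrite hs; lia.
have H2 : size s <= 2 * r + 2 * a by rewrite hs; lia.
have H3 : 2 * a <= size s by rewrite hs; lia.
have H := @U_rot2 (2 * r) (2 * a) s H1 H2 H3.
rewrite hs hc (_ : 2 * r + 2 * a - 2 * n = 2 * (a + r - n)) in H; last by lia.
lia.
Qed.

Lemma nth_rot' (T : Type) (x0 : T) m (s : seq T) i : m <= size s -> i < size s ->
  nth x0 (rot m s) i = nth x0 s (if i + m < size s then i + m else i + m - size s).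
Proof.
move=> h1 h2; rewrite /rot nth_cat size_drop.
case: ltnP => h3.
  rewrite nth_drop ifT; last by lia.
  by rewrite addnC.
rewrite nth_take; last by lia.
rewrite ifF; last by lia.
congr nth; lia.
Qed.

Definition sg n r a := if a + r < n then a + r else a + r - n.

Lemma map_sg n r : r <= n -> map (sg n r) (iota 0 n) = rot r (iota 0 n).
Proof.
move=> hr; apply: (@eq_from_nth _ 0); first by rewrite size_map size_rot.
rewrite size_map size_iota => i hi.
rewrite (nth_map 0) ?size_iota // nth_rot' ?size_iota // nth_iota // nth_iota /sg;
  case: ifP => h; lia.
Qed.

Lemma mk_rot b n s r a : size s = 2 * n -> r <= n -> a < n ->
  mk b (rot (2 * r) s) a = mk b s (sg n r a).
Proof.
move=> hs hr ha; rewrite /mk nth_rot' hs; try lia.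
rewrite /sg; case: ifP => h; case: ifP => h'; try lia; congr (nth _ _ _ == _); lia.
Qed.

Lemma low_pt b n s r a : size s = 2 * n -> count id s = n.+1 -> r < n -> a < n ->
  (mk b (rot (2 * r) s) a && (D (rot (2 * r) s) a <= 0)%R) =
  (mk b s (sg n r a) && prec s (sg n r a) r).
Proof.
move=> hs hc hr ha; rewrite (@mk_rot b n s r a) //; last by lia.
congr (_ && _); rewrite /prec /sg.
case: ifP => h.
  rewrite (@D_rot1 n) //; last by lia.
  apply/idP/idP; lia.
rewrite (@D_rot2 n) //; try lia.
Qed.

Lemma count_sg n r (P : pred nat) : r <= n ->
  count (fun a => P (sg n r a)) (iota 0 n) = count P (iota 0 n).
Proof.
move=> hr; rewrite -(count_map (sg n r) P) map_sg //.
by apply/permP; rewrite perm_rot.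
Qed.

Lemma low_rot b n s r : size s = 2 * n -> count id s = n.+1 -> r < n ->
  even_steps_low b (rot (2 * r) s) = rk b n s r.
Proof.
move=> hs hc hr; rewrite (@even_steps_lowE b n) ?size_rot //.
rewrite (eq_in_count (a2 := fun a => (fun q => mk b s q && prec s q r) (sg n r a))).
  by rewrite (@count_sg n r (fun q => mk b s q && prec s q r)) //; lia.
by move=> a; rewrite mem_iota => /andP[_ ha]; apply: low_pt.
Qed.

Lemma steps_rot b n s r : size s = 2 * n -> r <= n ->
  even_steps b (rot (2 * r) s) = even_steps b s.
Proof.
move=> hs hr; rewrite (@even_stepsE b n) ?size_rot // (@even_stepsE b n s hs).
rewrite (eq_in_count (a2 := fun a => mk b s (sg n r a))).
  by rewrite count_sg.
by move=> a; rewrite mem_iota => /andP[_ ha]; apply: mk_rot.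
Qed.

Lemma count_le_in (P Q : pred nat) l : (forall y, y \in l -> P y -> Q y) ->
  count P l <= count Q l.
Proof.
elim: l => [|x l IH] //= H.
have := IH (fun y hy => H y ltac:(by rewrite inE hy orbT)).
have := H x (mem_head _ _); case: (P x); case: (Q x) => //=; try lia.
Qed.

Lemma count_lt_in (P Q : pred nat) l x : (forall y, y \in l -> P y -> Q y) ->
  x \in l -> Q x -> ~~ P x -> count P l < count Q l.
Proof.
elim: l => [|z l IH] //= H.
rewrite inE => /orP[/eqP <-|hx] hQ hP.
  have := @count_le_in P Q l (fun y hy => H y ltac:(by rewrite inE hy orbT)).
  rewrite hQ (negbTE hP) /=; lia.
have := IH (fun y hy => H y ltac:(by rewrite inE hy orbT)) hx hQ hP.
have := H z (mem_head _ _); case: (P z); case: (Q z) => //=; try lia.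
Qed.

Lemma rk_lt b n s q r : q < n -> r < n -> mk b s r -> prec s q r -> q != r ->
  rk b n s q < rk b n s r.
Proof.
move=> hq hr mr pqr nqr; apply: (@count_lt_in _ _ _ r).
- move=> y _ /andP[-> pyq] /=; exact: prec_trans pyq pqr.
- by rewrite mem_iota; lia.
- by rewrite mr prec_refl.
- apply/negP => /andP[_ prq]; move: nqr.
  by rewrite (prec_anti pqr prq) eqxx.
Qed.

Lemma rk_inj b n s q r : q < n -> r < n -> mk b s q -> mk b s r ->
  rk b n s q = rk b n s r -> q = r.
Proof.
move=> hq hr mq mr e; case: (eqVneq q r) => // nqr.
case/orP: (prec_total s q r) => p.
  by have := rk_lt hq hr mr p nqr; lia.
by have := rk_lt hr hq mq p (contra_neq (@esym _ _ _) nqr); lia.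
Qed.

Lemma rk_ge1 b n s r : r < n -> mk b s r -> 0 < rk b n s r.
Proof.
move=> hr mr; rewrite -(count_pred0 (iota 0 n)); apply: (@count_lt_in pred0 _ _ r) => //.
- by rewrite mem_iota; lia.
- by rewrite mr prec_refl.
Qed.

Lemma rk_le b n s r : rk b n s r <= count (mk b s) (iota 0 n).
Proof. by apply: count_le_in => y _ /andP[]. Qed.

Lemma rk_exists b n s j : 1 <= j <= count (mk b s) (iota 0 n) ->
  exists2 r, r < n & mk b s r && (rk b n s r == j).
Proof.
move=> hj.
set l := filter (mk b s) (iota 0 n).
have ul : uniq l := filter_uniq _ (iota_uniq 0 n).
have uL : uniq (map (rk b n s) l).
  rewrite map_inj_in_uniq // => q r.
  rewrite !mem_filter !mem_iota => /andP[mq /andP[_ hq]] /andP[mr /andP[_ hr]].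
  exact: rk_inj.
have sub : {subset map (rk b n s) l <= iota 1 (count (mk b s) (iota 0 n))}.
  move=> x /mapP[r]; rewrite mem_filter mem_iota => /andP[mr /andP[_ hr]] ->.
  rewrite add0n in hr; rewrite mem_iota; have := rk_ge1 hr mr; have := rk_le b n s r; lia.
have [_ eqL] := uniq_min_size uL sub
  ltac:(by rewrite size_iota size_map size_filter).
have : j \in map (rk b n s) l by rewrite eqL mem_iota; lia.
case/mapP => r; rewrite mem_filter mem_iota => /andP[mr /andP[_ hr]] ->.
by exists r => //; rewrite mr eqxx.
Qed.

Lemma head_mk (c b : bool) n (s : seq bool) : size s = 2 * n -> 0 < n ->
  (head c s == b) = mk b s 0.
Proof. by case: s => [|x s'] /= hs hn; [lia | rewrite /mk muln0]. Qed.

Lemma count_rot' m (s : seq bool) : count id (rot m s) = count id s.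
Proof. by apply/permP; rewrite perm_rot. Qed.

Lemma count_rotr' m (s : seq bool) : count id (rotr m s) = count id s.
Proof. by apply/permP; rewrite perm_rotr. Qed.

Section Card.
Variables (b : bool) (n m j : nat).
Hypotheses (hn : 0 < n) (hj : 1 <= j <= m).

Definition Xs := [set t : (2 * n).-tuple bool | inP n t && (even_steps b t == m)].
Definition Ss := [set t : (2 * n).-tuple bool |
  [&& inP n t, head (~~ b) t == b, even_steps b t == m & even_steps_low b t == j]].

Definition hh (p : (2 * n).-tuple bool * 'I_n) : (2 * n).-tuple bool :=
  rotr_tuple (2 * p.2) p.1.

Lemma hh_props (s : (2 * n).-tuple bool) (r : nat) : s \in Ss -> r < n ->
  let t := rotr (2 * r) s in
  [/\ size t = 2 * n, count id t = n.+1, even_steps b t = m,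
      mk b t r & rk b n t r = j].
Proof.
rewrite inE => /and4P[/andP[/eqP hs /eqP hc] hh' /eqP he /eqP hl] hr t.
have ht : size t = 2 * n by rewrite size_rotr.
have ct : count id t = n.+1 by rewrite count_rotr'.
have rt : rot (2 * r) t = s by rewrite /t rotrK.
split => //.
- by rewrite -(@steps_rot b n t r) ?rt //; lia.
- have := @mk_rot b n t r 0 ht ltac:(lia) hn.
  rewrite rt /sg add0n hr => <-.
  by rewrite -(head_mk (~~ b) b hs hn).
- by rewrite -(@low_rot b n t r) ?rt.
Qed.

Lemma card_XS : #|Xs| = #|Ss| * n.
Proof.
have -> : Xs = hh @: setX Ss [set: 'I_n].
  apply/setP => t; apply/idP/imsetP.
  - rewrite inE => /andP[/andP[/eqP hs /eqP hc] /eqP he].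
    have hm : count (mk b t) (iota 0 n) = m by rewrite -(@even_stepsE b n t hs).
    have [r hr /andP[mr /eqP rr]] := @rk_exists b n t j ltac:(by rewrite hm).
    exists (rot_tuple (2 * r) t, Ordinal hr).
      rewrite inE /= in_setT andbT inE /inP /= size_rot hs eqxx count_rot' hc eqxx /=.
      rewrite (head_mk _ _ (n := n)) ?size_rot // (@mk_rot b n t r 0 hs) ?(ltnW hr) //.
      rewrite /sg add0n hr mr /= (@steps_rot b n t r hs (ltnW hr)) he eqxx /=.
      by rewrite (@low_rot b n t r hs hc hr) rr.
    by apply: val_inj; rewrite /= rotK.
  - case=> [[s r]]; rewrite in_setX => /andP[sS _] ->.
    have [hs hc he _ _] := hh_props sS (ltn_ord r).
    by rewrite inE /inP hs hc he !eqxx.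
rewrite card_in_imset; first by rewrite cardsX cardsT card_ord.
move=> [s1 r1] [s2 r2]; rewrite !in_setX => /andP[s1S _] /andP[s2S _] e.
have [h1 c1 _ m1 k1] := hh_props s1S (ltn_ord r1).
have [h2 c2 _ m2 k2] := hh_props s2S (ltn_ord r2).
have e' : rotr (2 * r1) s1 = rotr (2 * r2) s2 by move: e => /(congr1 val).
rewrite e' in m1 k1.
have er : r1 = r2.
  apply: val_inj; apply: (rk_inj (ltn_ord r1) (ltn_ord r2) m1 m2); by rewrite k1 k2.
subst r2; congr (_, _); apply: val_inj.
have := congr1 (rot (2 * r1)) e'; by rewrite !rotrK.
Qed.

End Card.

Lemma card_ord_count n (P : pred nat) : #|[set i : 'I_n | P i]| = count P (iota 0 n).
Proof.
rewrite cardsE -val_enum_ord count_map cardE /enum_mem size_filter count_filter.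
by apply: eq_count => x; rewrite /= !inE andbT.
Qed.

Section Count.
Variable n : nat.

Definition Ev (t : (2 * n).-tuple bool) := [set i : 'I_n | nth false t (2 * i)].
Definition Od (t : (2 * n).-tuple bool) := [set i : 'I_n | nth false t (2 * i).+1].

Lemma count_EvOd (t : (2 * n).-tuple bool) : count id t = #|Ev t| + #|Od t|.
Proof.
rewrite /Ev /Od (card_ord_count n (fun a => nth false t (2 * a))).
rewrite (card_ord_count n (fun a => nth false t (2 * a).+1)) -count_split2.
rewrite -{1}(mkseq_nth false t) size_tuple /mkseq count_map.
by apply: eq_count.
Qed.

Lemma steps_true (t : (2 * n).-tuple bool) : even_steps true t = #|Ev t|.
Proof.
rewrite (@even_stepsE true n t (size_tuple t)) /Ev.
rewrite (card_ord_count n (fun a => nth false t (2 * a))).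
by apply: eq_count => a; rewrite /mk eqb_id.
Qed.

Lemma steps_false (t : (2 * n).-tuple bool) : even_steps false t = n - #|Ev t|.
Proof.
rewrite (@even_stepsE false n t (size_tuple t)) /Ev.
rewrite (card_ord_count n (fun a => nth false t (2 * a))).
rewrite -[n in n - _](size_iota 0 n) -(count_predC (fun a => nth false t (2 * a))).
rewrite addKn; apply: eq_count => a; by rewrite /mk /= eqbF_neg.
Qed.

Lemma Ev_le (t : (2 * n).-tuple bool) : #|Ev t| <= n.
Proof.
rewrite /Ev (card_ord_count n (fun a => nth false t (2 * a))).
by apply: (leq_trans (count_size _ _)); rewrite size_iota.
Qed.

Definition phi (t : (2 * n).-tuple bool) := (Ev t, Od t).

Lemma phi_inj : injective phi.
Proof.
move=> t1 t2 [e1 e2]; apply: eq_from_tnth => i; rewrite !(tnth_nth false).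
have hi := ltn_ord i.
have hk : i./2 < n by rewrite ltn_half_double -mul2n.
have := odd_double_half i; rewrite -mul2n.
case: (odd i) => /= hdec.
- have := congr1 (fun A : {set 'I_n} => Ordinal hk \in A) e2; rewrite !inE /=.
  rewrite -[(2 * _).+1]add1n hdec.
  by move=> ->.
- have := congr1 (fun A : {set 'I_n} => Ordinal hk \in A) e1; rewrite !inE /=.
  rewrite add0n in hdec; rewrite hdec.
  by move=> ->.
Qed.

Definition mkt (E O : {set 'I_n}) : seq bool :=
  mkseq (fun i => if odd i then i./2 \in [seq val x | x in O]
                  else i./2 \in [seq val x | x in E]) (2 * n).

Lemma mkt_size E O : size (mkt E O) == 2 * n.
Proof. by rewrite size_mkseq. Qed.

Lemma phi_surj E O : phi (Tuple (mkt_size E O)) = (E, O).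
Proof.
have memv (A : {set 'I_n}) (i : 'I_n) : (val i \in [seq val x | x in A]) = (i \in A).
  by rewrite mem_map ?mem_enum //; apply: val_inj.
congr (_, _); apply/setP => i; have hi := ltn_ord i;
  rewrite inE /= /mkt nth_mkseq; try lia.
- by rewrite oddM /= mul2n doubleK memv.
- by rewrite /= oddM /= mul2n uphalf_double memv.
Qed.

Lemma card_gen (P : nat -> nat -> bool) :
  #|[set t : (2 * n).-tuple bool | P #|Ev t| #|Od t|]| =
  #|[set p : {set 'I_n} * {set 'I_n} | P #|p.1| #|p.2|]|.
Proof.
rewrite -(card_imset _ phi_inj); apply: eq_card => p.
rewrite [in RHS]inE; apply/imsetP/idP.
- by case=> t; rewrite inE => h ->.
- case: p => E O /= h; exists (Tuple (mkt_size E O)); last by rewrite phi_surj.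
  rewrite inE; have := phi_surj E O; rewrite /phi => -[-> ->] //.
Qed.

Lemma card_xy x y :
  #|[set t : (2 * n).-tuple bool | (#|Ev t| == x) && (#|Od t| == y)]| = 'C(n, x) * 'C(n, y).
Proof.
rewrite (card_gen (fun a c => (a == x) && (c == y))).
have -> : [set p : {set 'I_n} * {set 'I_n} | (#|p.1| == x) && (#|p.2| == y)] =
   setX [set A : {set 'I_n} | #|A| == x] [set A : {set 'I_n} | #|A| == y].
  by apply/setP => -[A B]; rewrite !inE.
by rewrite cardsX !card_draws card_ord.
Qed.

End Count.

Lemma Xs_true n k : k <= n ->
  Xs true n k = [set t : (2 * n).-tuple bool | (#|Ev t| == k) && (#|Od t| == n.+1 - k)].
Proof.
move=> hk; apply/setP => t; rewrite !inE /inP size_tuple eqxx count_EvOd steps_true /=.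
apply/idP/idP; lia.
Qed.

Lemma Xs_false n k : k <= n ->
  Xs false n k = [set t : (2 * n).-tuple bool | (#|Ev t| == n - k) && (#|Od t| == k.+1)].
Proof.
move=> hk; apply/setP => t; rewrite !inE /inP size_tuple eqxx count_EvOd steps_false /=.
have hE := Ev_le t.
move: hE; set e := #|Ev t|; set o := #|Od t| => hE. apply/idP/idP; lia.
Qed.

Lemma Xs_big b n k : n < k -> Xs b n k = set0.
Proof.
move=> hk; apply/setP => t; rewrite !inE.
have hE := Ev_le t.
case: b; rewrite ?steps_true ?steps_false; move: hE; set e := #|Ev t| => hE; apply/negP => /andP[_ /eqP]; lia.
Qed.

Lemma rat_div (S k X : nat) : 0 < k -> S * k = X ->
  (S%:R : rat) = ((k%:R)^-1 * X%:R)%R.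
Proof.
move=> hk <-; rewrite natrM mulrC mulfK //.
by rewrite pnatr_eq0 -lt0n.
Qed.

Unset Implicit Arguments.
Theorem theorem12 (n : nat) : 1 <= n ->
  (forall k j : nat, 1 < k -> 1 <= j <= k - 1 ->
     (#|[set t : (2 * n).-tuple bool |
          [&& inP n t, head true t == false,
              even_steps false t == k - 1 & even_steps_low false t == j]]|%:R
        : rat)
     = ((k - 1)%:R^-1 * ('C(n, k) * 'C(n - 1, k - 2))%:R)%R) /\
  (forall k j : nat, 1 <= k -> 1 <= j <= k ->
     (#|[set t : (2 * n).-tuple bool |
          [&& inP n t, head false t == true,
              even_steps true t == k & even_steps_low true t == j]]|%:R
        : rat)
     = (k%:R^-1 * ('C(n - 1, k - 1) * 'C(n, k - 1))%:R)%R).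
Proof.
move=> hn; split.
- move=> k j hk hj.
  have hc := @card_XS false n (k - 1) j hn hj.
  change ((#|Ss false n (k - 1) j|%:R : rat) =
    ((k - 1)%:R^-1 * ('C(n, k) * 'C(n - 1, k - 2))%:R)%R).
  apply: rat_div; first lia.
  move: hc; set S := #|Ss false n (k - 1) j| => hc.
  case: (leqP (k - 1) n) => hkn.
  + rewrite Xs_false // card_xy bin_sub // in hc.
    have e1 : (k - 1).+1 = k by lia.
    rewrite e1 in hc.
    have hd := mul_bin_diag n (k - 2).
    have e2 : (k - 2).+1 = k - 1 by lia.
    rewrite e2 -subn1 in hd.
    apply/eqP; rewrite -(eqn_pmul2l hn); apply/eqP.
    transitivity ((k - 1) * (S * n)); first by ring.
    rewrite -hc; transitivity ('C(n, k) * (n * 'C(n - 1, k - 2))); last by ring.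
    rewrite hd; ring.
  + rewrite Xs_big // cards0 in hc.
    rewrite (bin_small (n := n) (m := k)); last by lia.
    nia.
- move=> k j hk hj.
  have hc := @card_XS true n k j hn hj.
  change ((#|Ss true n k j|%:R : rat) =
    (k%:R^-1 * ('C(n - 1, k - 1) * 'C(n, k - 1))%:R)%R).
  apply: rat_div; first lia.
  move: hc; set S := #|Ss true n k j| => hc.
  case: (leqP k n) => hkn.
  + rewrite Xs_true // card_xy in hc.
    have e1 : n.+1 - k = n - (k - 1) by lia.
    rewrite e1 bin_sub in hc; last by lia.
    have hd := mul_bin_diag n (k - 1).
    have e2 : (k - 1).+1 = k by lia.
    rewrite e2 -subn1 in hd.
    apply/eqP; rewrite -(eqn_pmul2l hn); apply/eqP.
    transitivity (k * (S * n)); first by ring.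
    rewrite -hc; transitivity ('C(n, k - 1) * (n * 'C(n - 1, k - 1))); last by ring.
    rewrite hd; ring.
  + rewrite Xs_big // cards0 in hc.
    rewrite (bin_small (n := n - 1) (m := k - 1)); last by lia.
    nia.
Qed.
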